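(* For the $2$-state GM+I model on a binary 4-taxon tree $T$, numerical parameters are generically locally identifiable: there is a proper algebraic variety $Y_T\subsetneq\mathbb C^{13}$ such that for every $\mathbf s\in S_T\setminus Y_T$ there is a neighborhood of $\mathbf s$ on which $\phi_T$ is injective.
   Context: For a binary 4-taxon tree $T$ with edge set $E$ ($|E|=5$), the $2$-state GM+I model has parameters $\mathbf s=(\delta,\pi_I,\pi_{GM},(M_e)_{e\in E})$: $\delta\in[0,1]$, probability vectors $\pi_I,\pi_{GM}\in[0,1]^2$ ($\pi_{GM}$ the distribution at a chosen root $r$), and $2\times 2$ Markov matrices $M_e$ (rows summing to 1) for edges directed away from $r$; these form the stochastic parameter space $S_T\subseteq\mathbb R^{13}$. The joint leaf distribution $P=\phi_T(\mathbf s)$ has entries $p_{i_1i_2i_3i_4}=\delta\,\epsilon(i_1,\dots,i_4)\pi_I(i_1)+(1-\delta)\sum_{(j_v)}\pi_{GM}(j_r)\prod_{e=(u\to w)}M_e(j_u,j_w)$, with $\epsilon=1$ if all indices equal and $0$ otherwise, the sum over all state assignments to vertices extending the leaf states. *)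

(* Defs.v *)
From mathcomp Require Import all_boot all_order all_algebra.
From mathcomp Require Import reals.
From mathcomp Require Import complex.
From mathcomp Require mpoly.
Set Implicit Arguments. Unset Strict Implicit. Unset Printing Implicit Defensive.
Import Order.TTheory GRing.Theory Num.Theory.
Local Open Scope ring_scope.

(* Vertices of a binary 4-taxon tree: 'I_6, leaves 0,1,2,3 (= taxa 1..4),
   internal vertices 4 and 5.  The topology is given by a set A of two
   leaves: the leaves of A are adjacent to vertex 4, the others to vertex 5
   (every binary 4-taxon tree arises this way).
   Edges: 'I_5; edge k < 4 is the pendant edge of leaf k, edge 4 is the
   internal edge {4,5}. *)

Definition tree4 := {set 'I_4}.
Definition is_binary_tree4 (A : tree4) : Prop := #|A| = 2%N.

Definition hub (A : tree4) (k : 'I_4) : 'I_6 :=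
  if k \in A then inord 4 else inord 5.

Definition edge_ends (A : tree4) (e : 'I_5) : 'I_6 * 'I_6 :=
  match insub (val e) : option 'I_4 with
  | Some k => (widen_ord (isT : (4 <= 6)%N) k, hub A k)
  | None => (inord 4, inord 5)
  end.

Definition side (A : tree4) (v : 'I_6) : 'I_6 :=
  match insub (val v) : option 'I_4 with
  | Some k => hub A k
  | None => v
  end.

(* edge e directed away from root r: (parent, child) *)
Definition dir_edge (A : tree4) (r : 'I_6) (e : 'I_5) : 'I_6 * 'I_6 :=
  let: (x, y) := edge_ends A e in
  if (val e < 4)%N then
    (* x is a leaf, y its hub: the leaf is the parent iff it is the root *)
    (if r == x then (x, y) else (y, x))
  else
    (* internal edge (4,5): 4 is the parent iff the root is on 4's side *)
    (if side A r == x then (x, y) else (y, x)).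

(* Coordinates of the parameter vector s in R^13 (free coordinates):
     s 0           = delta
     s 1           = pi_I(0)       (pi_I(1)  = 1 - s 1)
     s 2           = pi_GM(0)      (pi_GM(1) = 1 - s 2)
     s (3 + 2e)    = M_e(0,0)      (M_e(0,1) = 1 - s (3+2e))
     s (4 + 2e)    = M_e(1,0)      (M_e(1,1) = 1 - s (4+2e))   for e : 'I_5. *)
Section Model.
Variable R : realType.
Implicit Types (s : 'I_13 -> R).

Definition prob2 (a : R) (i : 'I_2) : R := if val i == 0%N then a else 1 - a.

Definition delta s : R := s (inord 0).
Definition piI s (i : 'I_2) : R := prob2 (s (inord 1)) i.
Definition piGM s (i : 'I_2) : R := prob2 (s (inord 2)) i.
Definition Medge s (e : 'I_5) (i j : 'I_2) : R :=
  prob2 (s (inord (3 + 2 * val e + val i))) j.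

Definition stoch_params s : Prop := forall k, 0 <= s k <= 1.

Definition vstate (lf : 'I_4 -> 'I_2) (a b : 'I_2) (v : 'I_6) : 'I_2 :=
  match insub (val v) : option 'I_4 with
  | Some k => lf k
  | None => if val v == 4%N then a else b
  end.

Definition phiT (A : tree4) (r : 'I_6) s (lf : 'I_4 -> 'I_2) : R :=
  delta s * (if [forall k, lf k == lf ord0] then 1 else 0) * piI s (lf ord0)
  + (1 - delta s) *
    \sum_(a : 'I_2) \sum_(b : 'I_2)
      (piGM s (vstate lf a b r) *
       \prod_(e : 'I_5)
         Medge s e (vstate lf a b (dir_edge A r e).1)
                   (vstate lf a b (dir_edge A r e).2)).

Definition locally_injective (A : tree4) (r : 'I_6) s : Prop :=
  exists2 eps : R, 0 < eps &
    forall s1 s2 : 'I_13 -> R,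
      stoch_params s1 -> stoch_params s2 ->
      (forall k, `|s1 k - s k| < eps) -> (forall k, `|s2 k - s k| < eps) ->
      (forall lf : {ffun 'I_4 -> 'I_2}, phiT A r s1 lf = phiT A r s2 lf) ->
      s1 = s2.

Definition variety (Y : ('I_13 -> R[i]) -> Prop) : Prop :=
  exists F : mpoly.mpoly 13 R[i] -> Prop,
    forall z, Y z <-> (forall f, F f -> mpoly.meval z f = 0).

Definition proper_variety (Y : ('I_13 -> R[i]) -> Prop) : Prop :=
  variety Y /\ exists z, ~ Y z.

Definition realC s : 'I_13 -> R[i] := fun k => (s k)%:C%C.

End Model.

(* Main.v *)
Require Import Defs.
From mathcomp Require Import all_boot all_order all_algebra.
From mathcomp Require Import reals complex.
From mathcomp Require Import mpoly ring lra zify.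
From Stdlib Require Import FunctionalExtensionality.
Set Implicit Arguments. Unset Strict Implicit. Unset Printing Implicit Defensive.
Import Order.TTheory GRing.Theory Num.Theory.
Local Open Scope ring_scope.

(* Proof strategy: the Jacobian-type matrix Jm (finite
   differences, exact since phi is affine in each coordinate) has a nonzero
   determinant polynomial (certified at an integer point modulo 7); where it
   does not vanish, a telescoping identity plus continuity of det gives local
   injectivity. *)


Definition ordn_aux (m n : nat) (b : bool) : (n < m.+1)%N = b -> 'I_m.+1 :=
  if b as b' return ((n < m.+1)%N = b' -> 'I_m.+1)
  then fun H => Ordinal H else fun _ => ord0.
Definition ordn {m : nat} (n : nat) : 'I_m.+1 := ordn_aux (erefl (n < m.+1)%N).

Lemma ordnE m n : @ordn m n = inord n.
Proof.
apply: val_inj; rewrite /ordn /inord val_insubd /=.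
have : forall b (H : (n < m.+1)%N = b), val (ordn_aux H) = if b then n else 0%N.
  by case.
by move=> ->.
Qed.

Definition opt4_aux (n : nat) (b : bool) : (n < 4)%N = b -> option 'I_4 :=
  if b as b' return ((n < 4)%N = b' -> option 'I_4)
  then fun H => Some (Ordinal H) else fun _ => None.
Definition opt4 (n : nat) : option 'I_4 := opt4_aux (erefl (n < 4)%N).

Lemma opt4E n : opt4 n = insub n.
Proof.
rewrite /opt4.
have : forall b (H : (n < 4)%N = b), opt4_aux H = insub n.
  case=> H /=; first by rewrite insubT.
  by rewrite insubF.
by move=> ->.
Qed.

Section Gen.
Variable K : comNzRingType.
Definition prob2G (a : K) (i : 'I_2) : K := if val i == 0%N then a else 1 - a.

Definition phiP (o13 : nat -> 'I_13) (alleq : ('I_4 -> 'I_2) -> bool)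
  (vs : ('I_4 -> 'I_2) -> 'I_2 -> 'I_2 -> 'I_6 -> 'I_2)
  (de : 'I_5 -> 'I_6 * 'I_6) (sm : ('I_2 -> K) -> K) (pr : ('I_5 -> K) -> K)
  (r : 'I_6) (s : 'I_13 -> K) (lf : 'I_4 -> 'I_2) : K :=
  s (o13 0%N) * (if alleq lf then 1 else 0) * prob2G (s (o13 1%N)) (lf ord0)
  + (1 - s (o13 0%N)) *
    sm (fun a => sm (fun b =>
      (prob2G (s (o13 2%N)) (vs lf a b r) *
       pr (fun e =>
         prob2G (s (o13 (3 + 2 * val e + val (vs lf a b (de e).1))%N))
                   (vs lf a b (de e).2))))).

Definition phiG (A : tree4) (r : 'I_6) (s : 'I_13 -> K) (lf : 'I_4 -> 'I_2) : K :=
  s (inord 0) * (if [forall k, lf k == lf ord0] then 1 else 0) * prob2G (s (inord 1)) (lf ord0)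
  + (1 - s (inord 0)) *
    \sum_(a : 'I_2) \sum_(b : 'I_2)
      (prob2G (s (inord 2)) (vstate lf a b r) *
       \prod_(e : 'I_5)
         prob2G (s (inord (3 + 2 * val e + val (vstate lf a b (dir_edge A r e).1))))
                   (vstate lf a b (dir_edge A r e).2)).

Definition upd (s : 'I_13 -> K) (k : 'I_13) (c : K) : 'I_13 -> K :=
  fun j => if j == k then c else s j.

Definition sum2 (F : 'I_2 -> K) := F ord0 + (F (lift ord0 ord0) + 0).
Definition prod5 (F : 'I_5 -> K) :=
  F ord0 * (F (lift ord0 ord0) * (F (lift ord0 (lift ord0 ord0)) *
  (F (lift ord0 (lift ord0 (lift ord0 ord0))) *
  (F (lift ord0 (lift ord0 (lift ord0 (lift ord0 ord0)))) * 1)))).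

Lemma sum2E F : \sum_(a < 2) F a = sum2 F.
Proof. by rewrite !big_ord_recl big_ord0. Qed.
Lemma prod5E F : \prod_(a < 5) F a = prod5 F.
Proof. by rewrite !big_ord_recl big_ord0. Qed.
End Gen.

Lemma phiT_G (R : realType) A r (s : 'I_13 -> R) lf : phiT A r s lf = phiG A r s lf.
Proof. reflexivity. Qed.

Definition hubE (inA : 'I_4 -> bool) (k : 'I_4) : 'I_6 :=
  if inA k then ordn 4 else ordn 5.
Definition edge_endsE inA (e : 'I_5) : 'I_6 * 'I_6 :=
  match opt4 (val e) with
  | Some k => (widen_ord (isT : (4 <= 6)%N) k, hubE inA k)
  | None => (ordn 4, ordn 5)
  end.
Definition sideE inA (v : 'I_6) : 'I_6 :=
  match opt4 (val v) with
  | Some k => hubE inA k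
  | None => v
  end.
Definition dir_edgeE inA (r : 'I_6) (e : 'I_5) : 'I_6 * 'I_6 :=
  let: (x, y) := edge_endsE inA e in
  if (val e < 4)%N then
    (if r == x then (x, y) else (y, x))
  else
    (if sideE inA r == x then (x, y) else (y, x)).
Definition vstateE (lf : 'I_4 -> 'I_2) (a b : 'I_2) (v : 'I_6) : 'I_2 :=
  match opt4 (val v) with
  | Some k => lf k
  | None => if val v == 4%N then a else b
  end.
Definition allEq (lf : 'I_4 -> 'I_2) :=
  (lf (ordn 1) == lf ord0) && (lf (ordn 2) == lf ord0) && (lf (ordn 3) == lf ord0).

Definition phiE (K : comNzRingType) inA r (s : 'I_13 -> K) lf : K :=
  phiP ordn allEq vstateE (dir_edgeE inA r) (@sum2 K) (@prod5 K) r s lf.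

Lemma allEqE lf : [forall k, lf k == lf ord0] = allEq lf.
Proof.
rewrite /allEq !ordnE; apply/forallP/idP.
  by move=> H; rewrite !H.
move=> /andP[/andP[/eqP H1 /eqP H2] /eqP H3] k; apply/eqP.
case: k => [[|[|[|[|k]]]] Hk] //.
- by congr lf; apply: val_inj.
- by rewrite -H1; congr lf; apply: val_inj; rewrite /= inordK.
- by rewrite -H2; congr lf; apply: val_inj; rewrite /= inordK.
- by rewrite -H3; congr lf; apply: val_inj; rewrite /= inordK.
Qed.

Lemma vstateEE : vstateE = vstate.
Proof.
apply: functional_extensionality => lf; apply: functional_extensionality => a.
apply: functional_extensionality => b; apply: functional_extensionality => v.
by rewrite /vstateE opt4E.
Qed.

Lemma dir_edgeEE (A : tree4) r : dir_edgeE (fun k => k \in A) r = dir_edge A r.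
Proof.
apply: functional_extensionality => e.
by rewrite /dir_edgeE /edge_endsE /sideE /hubE !opt4E !ordnE.
Qed.

Lemma phiG_E (K : comNzRingType) (A : tree4) r (s : 'I_13 -> K) lf :
  phiG A r s lf = phiE (fun k => k \in A) r s lf.
Proof.
have -> : phiG A r s lf = phiP inord (fun lf => [forall k, lf k == lf ord0]) vstate
  (dir_edge A r) (fun F => \sum_(a < 2) F a) (fun F => \prod_(e < 5) F e) r s lf by [].
rewrite /phiE dir_edgeEE vstateEE.
have E1 : @inord 12 = @ordn 12.
  by apply: functional_extensionality => n; rewrite ordnE.
have E2 : (fun lf : 'I_4 -> 'I_2 => [forall k, lf k == lf ord0]) = allEq.
  by apply: functional_extensionality => f; rewrite allEqE.
have E3 : (fun F : 'I_2 -> K => \sum_(a < 2) F a) = @sum2 K.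
  by apply: functional_extensionality => F; rewrite sum2E.
have E4 : (fun F : 'I_5 -> K => \prod_(a < 5) F a) = @prod5 K.
  by apply: functional_extensionality => F; rewrite prod5E.
by rewrite E1 E2 E3 E4.
Qed.

Lemma prob2G_map (K K' : comNzRingType) (f : {rmorphism K -> K'}) a i :
  f (prob2G a i) = prob2G (f a) i.
Proof. by rewrite /prob2G; case: ifP => _; rewrite ?rmorphB ?rmorph1. Qed.

Lemma phiG_map (K K' : comNzRingType) (f : {rmorphism K -> K'}) A r s lf :
  f (phiG A r s lf) = phiG A r (f \o s) lf.
Proof.
rewrite /phiG rmorphD !rmorphM rmorphB rmorph1 !prob2G_map.
congr (_ * _ * _ + _ * _); first by case: ifP; rewrite ?rmorph1 ?rmorph0.
rewrite rmorph_sum; apply: eq_bigr => a _.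
rewrite rmorph_sum; apply: eq_bigr => b _.
rewrite rmorphM prob2G_map rmorph_prod; congr (_ * _).
by apply: eq_bigr => e _; rewrite prob2G_map.
Qed.

Lemma upd_map (K K' : comNzRingType) (f : {rmorphism K -> K'}) s k c :
  f \o upd s k c = upd (f \o s) k (f c).
Proof. by apply: functional_extensionality => j; rewrite /upd /=; case: ifP. Qed.

Definition rowidx : seq nat := [:: 2;3;4;5;7;8;9;10;11;12;13;14;15]%N.
Definition lfF (ii : 'I_13) (k : 'I_4) : 'I_2 := ordn (odd (nth 0%N rowidx ii %/ 2 ^ (3 - k))).
Definition lfs (ii : 'I_13) : {ffun 'I_4 -> 'I_2} := [ffun k => lfF ii k].

Lemma lfsE ii : (fun k => lfs ii k) = lfF ii.
Proof. by apply: functional_extensionality => k; rewrite ffunE. Qed.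

Definition Jm (K : comNzRingType) A r (s : 'I_13 -> K) : 'M[K]_13 :=
  \matrix_(i < 13, k < 13) (phiG A r (upd s k 1) (lfs i) - phiG A r (upd s k 0) (lfs i)).

Lemma Jm_map (K K' : comNzRingType) (f : {rmorphism K -> K'}) A r s :
  map_mx f (Jm A r s) = Jm A r (f \o s).
Proof.
apply/matrixP => i k; rewrite !mxE rmorphB !phiG_map !upd_map rmorph1 rmorph0 //.
Qed.


Definition zpt : seq nat := [:: 4;3;5;5;4;3;6;2;3;5;0;2;4]%N.
Definition zF (k : 'I_13) : 'Z_7 := (nth 0%N zpt k)%:R.
Definition JE inA r (ii k : 'I_13) : 'Z_7 :=
  phiE inA r (upd zF k 1) (lfF ii) - phiE inA r (upd zF k 0) (lfF ii).
Definition Ktab : seq (seq (seq nat)) := [:: 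
  [:: [:: 2; 4; 5; 2; 0; 5; 6; 4; 6; 3; 2; 3; 0]; [:: 6; 5; 3; 2; 1; 5; 3; 5; 6; 5; 0; 2; 5]; [:: 2; 4; 3; 6; 6; 6; 5; 2; 2; 5; 6; 1; 0]; [:: 6; 3; 6; 0; 5; 5; 0; 6; 6; 6; 4; 2; 0]; [:: 2; 4; 3; 1; 1; 6; 2; 2; 6; 2; 6; 5; 0]; [:: 1; 6; 2; 5; 6; 4; 3; 1; 4; 3; 4; 2; 0]; [:: 4; 4; 3; 6; 4; 6; 5; 4; 5; 1; 2; 1; 0]; [:: 0; 0; 0; 0; 0; 5; 0; 3; 0; 0; 0; 0; 0]; [:: 0; 0; 1; 5; 4; 0; 4; 4; 6; 6; 0; 5; 0]; [:: 0; 0; 0; 0; 0; 4; 5; 6; 4; 0; 0; 0; 0]; [:: 0; 0; 0; 0; 0; 4; 0; 1; 0; 5; 0; 3; 0]; [:: 5; 5; 6; 3; 0; 3; 5; 3; 3; 1; 5; 3; 0]; [:: 3; 4; 2; 2; 2; 3; 2; 0; 4; 5; 6; 4; 0]];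
  [:: [:: 2; 4; 3; 6; 6; 2; 4; 3; 3; 4; 2; 5; 0]; [:: 6; 5; 1; 6; 0; 3; 4; 2; 4; 1; 0; 1; 5]; [:: 2; 4; 3; 2; 1; 1; 5; 2; 1; 3; 6; 4; 0]; [:: 2; 5; 1; 4; 5; 3; 5; 3; 5; 4; 2; 6; 0]; [:: 3; 3; 0; 6; 3; 0; 4; 1; 3; 0; 3; 2; 0]; [:: 2; 2; 0; 1; 3; 5; 1; 1; 3; 3; 0; 2; 0]; [:: 3; 6; 6; 5; 4; 1; 5; 5; 4; 4; 0; 3; 0]; [:: 0; 0; 0; 0; 0; 0; 0; 0; 0; 1; 0; 2; 0]; [:: 0; 0; 0; 0; 0; 3; 2; 1; 3; 0; 0; 0; 0]; [:: 0; 0; 1; 5; 4; 3; 1; 0; 5; 2; 0; 4; 0]; [:: 0; 0; 0; 0; 0; 1; 0; 2; 0; 0; 0; 0; 0]; [:: 5; 5; 0; 1; 4; 4; 1; 4; 0; 2; 4; 2; 0]; [:: 2; 5; 1; 2; 0; 2; 1; 4; 6; 6; 6; 6; 0]];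
  [:: [:: 2; 4; 3; 6; 6; 2; 4; 3; 3; 4; 2; 5; 0]; [:: 6; 5; 1; 6; 0; 3; 4; 2; 4; 1; 0; 1; 5]; [:: 0; 2; 5; 4; 1; 1; 5; 0; 6; 5; 1; 4; 0]; [:: 1; 2; 0; 3; 2; 0; 2; 5; 2; 0; 5; 3; 0]; [:: 6; 3; 3; 6; 3; 2; 4; 2; 3; 5; 3; 4; 0]; [:: 4; 1; 3; 2; 1; 2; 6; 6; 1; 5; 1; 5; 0]; [:: 3; 5; 6; 4; 5; 4; 5; 1; 5; 3; 2; 2; 0]; [:: 0; 4; 5; 4; 3; 6; 3; 1; 5; 1; 2; 4; 0]; [:: 0; 5; 5; 4; 4; 2; 2; 6; 1; 3; 6; 5; 0]; [:: 0; 0; 5; 4; 6; 5; 3; 6; 1; 3; 0; 6; 0]; [:: 0; 0; 0; 0; 0; 5; 0; 3; 0; 2; 0; 4; 0]; [:: 3; 6; 0; 0; 6; 6; 0; 3; 6; 1; 0; 0; 0]; [:: 0; 1; 6; 5; 3; 5; 4; 2; 6; 4; 2; 2; 0]];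
  [:: [:: 1; 5; 3; 4; 0; 2; 5; 5; 4; 4; 1; 2; 0]; [:: 3; 1; 2; 0; 3; 6; 0; 1; 0; 5; 4; 6; 5]; [:: 1; 6; 3; 2; 5; 2; 6; 5; 3; 4; 5; 2; 0]; [:: 5; 5; 4; 6; 5; 5; 4; 4; 5; 2; 3; 1; 0]; [:: 5; 6; 5; 4; 6; 1; 5; 4; 6; 6; 2; 1; 0]; [:: 6; 6; 6; 1; 6; 4; 3; 2; 6; 3; 4; 4; 0]; [:: 6; 3; 2; 2; 3; 6; 6; 2; 3; 1; 1; 4; 0]; [:: 0; 0; 0; 6; 2; 5; 0; 3; 5; 5; 6; 3; 0]; [:: 0; 0; 0; 6; 2; 0; 0; 0; 0; 0; 0; 0; 0]; [:: 3; 4; 2; 0; 6; 3; 3; 2; 1; 1; 6; 5; 0]; [:: 0; 0; 0; 1; 5; 0; 6; 0; 2; 0; 0; 0; 0]; [:: 1; 1; 1; 4; 2; 2; 3; 0; 1; 5; 4; 1; 0]; [:: 2; 5; 6; 1; 0; 4; 6; 3; 3; 3; 0; 6; 0]];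
  [:: [:: 2; 4; 3; 6; 6; 2; 4; 3; 3; 4; 2; 5; 0]; [:: 6; 5; 1; 6; 0; 3; 4; 2; 4; 1; 0; 1; 5]; [:: 6; 2; 2; 0; 3; 4; 5; 0; 3; 4; 3; 0; 0]; [:: 2; 5; 1; 4; 5; 3; 5; 3; 5; 4; 2; 6; 0]; [:: 3; 3; 0; 6; 3; 0; 4; 1; 3; 0; 3; 2; 0]; [:: 1; 6; 2; 5; 6; 6; 1; 5; 6; 1; 6; 3; 0]; [:: 5; 5; 2; 4; 5; 6; 5; 4; 5; 1; 2; 1; 0]; [:: 0; 0; 0; 0; 0; 0; 0; 0; 0; 1; 0; 2; 0]; [:: 0; 0; 0; 0; 0; 3; 2; 1; 3; 0; 0; 0; 0]; [:: 0; 0; 1; 5; 4; 3; 1; 0; 5; 2; 0; 4; 0]; [:: 0; 0; 0; 0; 0; 1; 0; 2; 0; 0; 0; 0; 0]; [:: 5; 5; 0; 1; 4; 4; 1; 4; 0; 2; 4; 2; 0]; [:: 2; 5; 1; 2; 0; 2; 1; 4; 6; 6; 6; 6; 0]];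
  [:: [:: 2; 4; 3; 6; 6; 2; 4; 3; 3; 4; 2; 5; 0]; [:: 6; 5; 1; 6; 0; 3; 4; 2; 4; 1; 0; 1; 5]; [:: 0; 5; 0; 0; 5; 0; 2; 2; 1; 2; 6; 3; 0]; [:: 1; 2; 0; 3; 2; 0; 2; 5; 2; 0; 5; 3; 0]; [:: 6; 3; 3; 6; 3; 2; 4; 2; 3; 5; 3; 4; 0]; [:: 4; 1; 3; 2; 1; 2; 6; 6; 1; 5; 1; 5; 0]; [:: 3; 5; 6; 4; 5; 4; 5; 1; 5; 3; 2; 2; 0]; [:: 0; 0; 0; 0; 0; 5; 0; 3; 0; 5; 0; 3; 0]; [:: 0; 0; 4; 6; 2; 6; 0; 5; 0; 1; 0; 2; 0]; [:: 0; 0; 5; 4; 6; 5; 3; 6; 1; 3; 0; 6; 0]; [:: 0; 0; 0; 0; 0; 5; 0; 3; 0; 2; 0; 4; 0]; [:: 3; 6; 0; 0; 6; 6; 0; 3; 6; 1; 0; 0; 0]; [:: 0; 1; 6; 5; 3; 5; 4; 2; 6; 4; 2; 2; 0]];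
  [:: [:: 2; 6; 6; 3; 6; 0; 2; 3; 1; 3; 4; 2; 0]; [:: 0; 5; 4; 2; 1; 4; 3; 5; 6; 2; 0; 6; 5]; [:: 1; 5; 6; 3; 2; 1; 3; 5; 3; 1; 0; 0; 0]; [:: 4; 4; 2; 2; 5; 6; 6; 0; 0; 3; 2; 6; 0]; [:: 1; 6; 2; 4; 3; 5; 4; 0; 1; 0; 4; 1; 0]; [:: 0; 0; 0; 0; 0; 0; 0; 5; 0; 0; 0; 4; 0]; [:: 3; 3; 0; 0; 5; 4; 2; 6; 0; 3; 1; 2; 0]; [:: 6; 2; 4; 4; 2; 3; 1; 4; 6; 5; 6; 1; 0]; [:: 6; 6; 0; 4; 2; 3; 3; 4; 4; 0; 6; 0; 0]; [:: 3; 3; 0; 0; 5; 5; 5; 6; 0; 0; 6; 2; 0]; [:: 0; 0; 0; 0; 0; 1; 0; 3; 0; 5; 0; 1; 0]; [:: 4; 4; 0; 1; 0; 3; 6; 1; 2; 6; 0; 2; 0]; [:: 0; 6; 1; 1; 5; 1; 6; 5; 6; 5; 5; 6; 0]];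
  [:: [:: 1; 5; 6; 3; 2; 5; 1; 4; 1; 5; 0; 0; 0]; [:: 6; 4; 4; 2; 4; 5; 0; 1; 6; 1; 2; 0; 5]; [:: 4; 2; 4; 1; 2; 2; 4; 0; 5; 1; 3; 0; 0]; [:: 4; 2; 5; 6; 3; 3; 5; 4; 2; 5; 3; 1; 0]; [:: 0; 3; 4; 6; 3; 0; 4; 0; 3; 4; 3; 5; 0]; [:: 1; 4; 1; 2; 4; 5; 0; 6; 3; 5; 2; 2; 0]; [:: 5; 6; 5; 3; 6; 4; 3; 1; 1; 3; 1; 5; 0]; [:: 4; 5; 6; 3; 5; 3; 2; 4; 5; 6; 5; 4; 0]; [:: 3; 4; 1; 5; 6; 4; 3; 3; 4; 1; 6; 3; 0]; [:: 4; 4; 0; 0; 2; 4; 6; 5; 0; 4; 3; 4; 0]; [:: 0; 0; 0; 0; 0; 6; 0; 0; 0; 2; 0; 0; 0]; [:: 4; 6; 4; 1; 4; 5; 1; 4; 6; 5; 4; 5; 0]; [:: 6; 2; 6; 1; 1; 4; 0; 2; 4; 0; 3; 5; 0]];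
  [:: [:: 1; 5; 6; 3; 2; 5; 1; 4; 1; 5; 0; 0; 0]; [:: 6; 4; 4; 2; 4; 5; 0; 1; 6; 1; 2; 0; 5]; [:: 2; 0; 6; 3; 2; 2; 4; 5; 3; 3; 5; 0; 0]; [:: 4; 5; 1; 1; 4; 3; 2; 4; 5; 1; 4; 3; 0]; [:: 3; 3; 0; 6; 3; 4; 4; 3; 3; 0; 3; 0; 0]; [:: 0; 0; 0; 0; 0; 2; 0; 1; 0; 3; 0; 5; 0]; [:: 1; 1; 0; 0; 4; 6; 6; 3; 0; 0; 3; 1; 0]; [:: 3; 1; 3; 3; 6; 5; 0; 2; 0; 4; 5; 1; 0]; [:: 2; 1; 4; 2; 4; 1; 2; 6; 5; 0; 1; 2; 0]; [:: 6; 6; 0; 0; 3; 4; 3; 4; 0; 5; 5; 6; 0]; [:: 0; 0; 0; 0; 0; 0; 0; 5; 0; 0; 0; 4; 0]; [:: 0; 0; 0; 1; 5; 0; 1; 5; 3; 2; 3; 3; 0]; [:: 1; 5; 3; 3; 5; 4; 2; 5; 6; 5; 3; 6; 0]];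
  [:: [:: 2; 2; 4; 5; 3; 4; 4; 5; 5; 3; 1; 1; 0]; [:: 6; 2; 5; 1; 0; 5; 2; 1; 4; 2; 5; 3; 5]; [:: 2; 5; 4; 4; 0; 4; 6; 5; 0; 3; 1; 1; 0]; [:: 4; 2; 3; 5; 6; 3; 5; 4; 2; 3; 6; 2; 0]; [:: 2; 4; 2; 3; 5; 5; 3; 2; 4; 2; 5; 6; 0]; [:: 0; 3; 0; 0; 5; 3; 3; 3; 2; 1; 4; 1; 0]; [:: 0; 0; 0; 0; 0; 0; 3; 0; 0; 0; 5; 0; 0]; [:: 5; 4; 5; 6; 3; 2; 3; 5; 4; 5; 3; 1; 0]; [:: 3; 4; 4; 6; 3; 4; 3; 3; 4; 4; 3; 5; 0]; [:: 6; 4; 5; 5; 5; 0; 2; 1; 0; 5; 6; 3; 0]; [:: 0; 1; 0; 0; 4; 0; 5; 0; 0; 0; 6; 0; 0]; [:: 6; 2; 6; 6; 3; 3; 2; 6; 2; 0; 5; 4; 0]; [:: 4; 5; 1; 3; 2; 3; 4; 4; 0; 1; 4; 3; 0]];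
  [:: [:: 1; 5; 6; 3; 2; 5; 1; 4; 1; 5; 0; 0; 0]; [:: 6; 4; 4; 2; 4; 5; 0; 1; 6; 1; 2; 0; 5]; [:: 5; 1; 0; 4; 5; 5; 2; 2; 5; 3; 2; 4; 0]; [:: 4; 5; 1; 1; 4; 3; 2; 4; 5; 1; 4; 3; 0]; [:: 3; 3; 0; 6; 3; 4; 4; 3; 3; 0; 3; 0; 0]; [:: 0; 0; 0; 0; 0; 2; 0; 1; 0; 3; 0; 5; 0]; [:: 1; 1; 0; 0; 4; 6; 6; 3; 0; 0; 3; 1; 0]; [:: 6; 2; 4; 4; 2; 1; 5; 6; 2; 4; 2; 5; 0]; [:: 4; 4; 0; 5; 6; 3; 3; 4; 4; 0; 6; 0; 0]; [:: 6; 6; 0; 0; 3; 4; 3; 4; 0; 5; 5; 6; 0]; [:: 0; 0; 0; 0; 0; 0; 0; 5; 0; 0; 0; 4; 0]; [:: 0; 0; 0; 1; 5; 0; 1; 5; 3; 2; 3; 3; 0]; [:: 1; 5; 3; 3; 5; 4; 2; 5; 6; 5; 3; 6; 0]];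
  [:: [:: 1; 5; 6; 3; 2; 5; 1; 4; 1; 5; 0; 0; 0]; [:: 6; 4; 4; 2; 4; 5; 0; 1; 6; 1; 2; 0; 5]; [:: 1; 4; 1; 2; 4; 3; 4; 5; 3; 3; 4; 4; 0]; [:: 4; 2; 5; 6; 3; 3; 5; 4; 2; 5; 3; 1; 0]; [:: 0; 3; 4; 6; 3; 0; 4; 0; 3; 4; 3; 5; 0]; [:: 0; 0; 0; 0; 0; 3; 0; 3; 0; 1; 0; 1; 0]; [:: 0; 0; 0; 0; 0; 1; 3; 0; 0; 4; 5; 0; 0]; [:: 4; 5; 6; 3; 5; 3; 2; 4; 5; 6; 5; 4; 0]; [:: 3; 4; 1; 5; 6; 4; 3; 3; 4; 1; 6; 3; 0]; [:: 4; 4; 0; 0; 2; 4; 6; 5; 0; 4; 3; 4; 0]; [:: 0; 0; 0; 0; 0; 6; 0; 0; 0; 2; 0; 0; 0]; [:: 4; 6; 4; 1; 4; 5; 1; 4; 6; 5; 4; 5; 0]; [:: 6; 2; 6; 1; 1; 4; 0; 2; 4; 0; 3; 5; 0]];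
  [:: [:: 1; 2; 3; 1; 1; 4; 3; 5; 4; 6; 0; 0; 0]; [:: 3; 2; 2; 4; 6; 5; 2; 3; 3; 0; 4; 2; 5]; [:: 1; 6; 3; 0; 5; 2; 1; 1; 4; 1; 1; 3; 0]; [:: 0; 6; 1; 6; 5; 2; 1; 6; 4; 1; 4; 3; 0]; [:: 3; 5; 6; 2; 3; 4; 2; 4; 1; 1; 3; 6; 0]; [:: 0; 2; 0; 3; 2; 1; 5; 4; 5; 0; 2; 3; 0]; [:: 0; 4; 0; 6; 4; 2; 5; 2; 5; 5; 2; 0; 0]; [:: 0; 4; 0; 6; 4; 1; 5; 0; 5; 1; 2; 6; 0]; [:: 0; 1; 0; 5; 1; 1; 6; 1; 6; 6; 1; 0; 0]; [:: 5; 1; 6; 4; 0; 0; 0; 6; 4; 3; 2; 0; 0]; [:: 0; 0; 4; 0; 0; 0; 0; 0; 0; 1; 0; 0; 0]; [:: 0; 0; 4; 0; 0; 1; 4; 3; 4; 4; 3; 2; 0]; [:: 5; 5; 6; 3; 4; 4; 4; 2; 6; 4; 4; 2; 0]];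
  [:: [:: 1; 6; 3; 0; 5; 3; 5; 5; 6; 5; 5; 1; 0]; [:: 3; 6; 2; 3; 3; 2; 1; 3; 2; 4; 5; 5; 5]; [:: 3; 4; 4; 2; 1; 3; 5; 2; 1; 2; 6; 3; 0]; [:: 3; 0; 2; 0; 0; 0; 0; 2; 0; 6; 0; 0; 0]; [:: 6; 4; 2; 6; 0; 0; 0; 1; 3; 5; 1; 0; 0]; [:: 6; 6; 1; 1; 0; 3; 3; 1; 2; 0; 5; 6; 0]; [:: 2; 2; 5; 5; 0; 5; 3; 4; 5; 6; 2; 4; 0]; [:: 0; 2; 0; 3; 2; 2; 2; 6; 2; 4; 5; 4; 0]; [:: 0; 3; 0; 1; 3; 0; 6; 3; 6; 1; 1; 3; 0]; [:: 4; 5; 5; 1; 0; 0; 0; 3; 2; 2; 6; 0; 0]; [:: 4; 0; 6; 0; 0; 0; 0; 5; 0; 4; 0; 0; 0]; [:: 4; 4; 6; 1; 3; 0; 4; 2; 2; 5; 1; 3; 0]; [:: 6; 6; 5; 2; 1; 5; 5; 6; 4; 0; 2; 2; 0]];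
  [:: [:: 1; 6; 3; 0; 5; 3; 5; 5; 6; 5; 5; 1; 0]; [:: 3; 6; 2; 3; 3; 2; 1; 3; 2; 4; 5; 5; 5]; [:: 1; 2; 6; 4; 1; 3; 5; 0; 6; 4; 1; 3; 0]; [:: 3; 0; 2; 0; 0; 0; 0; 2; 0; 6; 0; 0; 0]; [:: 6; 4; 2; 6; 0; 0; 0; 1; 3; 5; 1; 0; 0]; [:: 0; 1; 0; 5; 1; 2; 2; 4; 2; 1; 5; 2; 0]; [:: 0; 5; 0; 4; 5; 0; 5; 5; 5; 4; 2; 5; 0]; [:: 2; 1; 5; 0; 6; 5; 5; 2; 0; 3; 0; 2; 0]; [:: 6; 0; 1; 6; 1; 2; 1; 5; 0; 5; 0; 4; 0]; [:: 4; 5; 5; 1; 0; 0; 0; 3; 2; 2; 6; 0; 0]; [:: 4; 0; 6; 0; 0; 0; 0; 5; 0; 4; 0; 0; 0]; [:: 4; 4; 6; 1; 3; 0; 4; 2; 2; 5; 1; 3; 0]; [:: 6; 6; 5; 2; 1; 5; 5; 6; 4; 0; 2; 2; 0]];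
  [:: [:: 1; 0; 3; 5; 6; 2; 6; 5; 0; 4; 4; 2; 0]; [:: 3; 2; 2; 4; 6; 6; 4; 1; 5; 5; 2; 6; 5]; [:: 1; 5; 3; 5; 2; 2; 2; 5; 5; 4; 0; 2; 0]; [:: 2; 4; 1; 2; 0; 0; 0; 6; 5; 3; 6; 0; 0]; [:: 0; 0; 0; 5; 0; 0; 0; 0; 0; 0; 2; 0; 0]; [:: 0; 5; 0; 4; 5; 6; 3; 2; 3; 2; 4; 3; 0]; [:: 0; 6; 0; 2; 6; 4; 6; 1; 6; 2; 1; 4; 0]; [:: 0; 3; 0; 1; 3; 6; 3; 5; 3; 3; 4; 6; 0]; [:: 0; 5; 0; 4; 5; 2; 3; 3; 3; 3; 4; 1; 0]; [:: 3; 0; 6; 5; 6; 6; 6; 1; 2; 3; 0; 6; 0]; [:: 0; 2; 0; 1; 0; 0; 0; 0; 5; 0; 6; 0; 0]; [:: 0; 6; 4; 3; 6; 3; 3; 6; 3; 1; 3; 3; 0]; [:: 0; 1; 0; 2; 5; 4; 5; 4; 0; 3; 3; 0; 0]];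
  [:: [:: 1; 6; 3; 0; 5; 3; 5; 5; 6; 5; 5; 1; 0]; [:: 3; 6; 2; 3; 3; 2; 1; 3; 2; 4; 5; 5; 5]; [:: 6; 3; 3; 3; 1; 4; 1; 4; 5; 2; 5; 5; 0]; [:: 2; 0; 1; 0; 0; 0; 0; 6; 0; 3; 0; 0; 0]; [:: 0; 0; 4; 5; 0; 0; 0; 0; 0; 3; 2; 0; 0]; [:: 0; 6; 0; 2; 6; 3; 5; 0; 5; 3; 2; 4; 0]; [:: 0; 5; 0; 4; 5; 1; 5; 0; 5; 1; 2; 6; 0]; [:: 0; 5; 0; 4; 5; 3; 5; 4; 5; 2; 2; 1; 0]; [:: 0; 3; 0; 1; 3; 4; 6; 2; 6; 0; 1; 5; 0]; [:: 5; 1; 6; 4; 0; 0; 0; 2; 6; 1; 3; 0; 0]; [:: 0; 0; 5; 0; 0; 0; 0; 0; 0; 1; 0; 0; 0]; [:: 0; 0; 4; 0; 0; 2; 4; 5; 4; 2; 3; 3; 0]; [:: 1; 1; 4; 2; 5; 3; 4; 1; 6; 5; 4; 2; 0]];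
  [:: [:: 1; 6; 3; 0; 5; 3; 5; 5; 6; 5; 5; 1; 0]; [:: 3; 6; 2; 3; 3; 2; 1; 3; 2; 4; 5; 5; 5]; [:: 6; 3; 1; 0; 4; 0; 2; 4; 1; 5; 6; 5; 0]; [:: 3; 0; 2; 0; 0; 0; 0; 2; 0; 6; 0; 0; 0]; [:: 6; 4; 2; 6; 0; 0; 0; 1; 3; 5; 1; 0; 0]; [:: 0; 1; 0; 5; 1; 2; 2; 4; 2; 1; 5; 2; 0]; [:: 0; 5; 0; 4; 5; 0; 5; 5; 5; 4; 2; 5; 0]; [:: 0; 2; 0; 3; 2; 2; 2; 6; 2; 4; 5; 4; 0]; [:: 0; 3; 0; 1; 3; 0; 6; 3; 6; 1; 1; 3; 0]; [:: 4; 5; 5; 1; 0; 0; 0; 3; 2; 2; 6; 0; 0]; [:: 4; 0; 6; 0; 0; 0; 0; 5; 0; 4; 0; 0; 0]; [:: 4; 4; 6; 1; 3; 0; 4; 2; 2; 5; 1; 3; 0]; [:: 6; 6; 5; 2; 1; 5; 5; 6; 4; 0; 2; 2; 0]];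
  [:: [:: 1; 2; 3; 1; 1; 4; 3; 5; 4; 6; 0; 0; 0]; [:: 3; 2; 2; 4; 6; 5; 2; 3; 3; 0; 4; 2; 5]; [:: 1; 6; 3; 0; 5; 2; 1; 1; 4; 1; 1; 3; 0]; [:: 0; 6; 1; 6; 5; 2; 1; 6; 4; 1; 4; 3; 0]; [:: 3; 5; 6; 2; 3; 4; 2; 4; 1; 1; 3; 6; 0]; [:: 0; 2; 0; 3; 2; 1; 5; 4; 5; 0; 2; 3; 0]; [:: 0; 4; 0; 6; 4; 2; 5; 2; 5; 5; 2; 0; 0]; [:: 0; 4; 0; 6; 4; 1; 5; 0; 5; 1; 2; 6; 0]; [:: 0; 1; 0; 5; 1; 1; 6; 1; 6; 6; 1; 0; 0]; [:: 5; 1; 6; 4; 0; 0; 0; 6; 4; 3; 2; 0; 0]; [:: 0; 0; 4; 0; 0; 0; 0; 0; 0; 1; 0; 0; 0]; [:: 0; 0; 4; 0; 0; 1; 4; 3; 4; 4; 3; 2; 0]; [:: 5; 5; 6; 3; 4; 4; 4; 2; 6; 4; 4; 2; 0]];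
  [:: [:: 1; 6; 3; 0; 5; 3; 5; 5; 6; 5; 5; 1; 0]; [:: 3; 6; 2; 3; 3; 2; 1; 3; 2; 4; 5; 5; 5]; [:: 3; 4; 4; 2; 1; 3; 5; 2; 1; 2; 6; 3; 0]; [:: 3; 0; 2; 0; 0; 0; 0; 2; 0; 6; 0; 0; 0]; [:: 6; 4; 2; 6; 0; 0; 0; 1; 3; 5; 1; 0; 0]; [:: 6; 6; 1; 1; 0; 3; 3; 1; 2; 0; 5; 6; 0]; [:: 2; 2; 5; 5; 0; 5; 3; 4; 5; 6; 2; 4; 0]; [:: 0; 2; 0; 3; 2; 2; 2; 6; 2; 4; 5; 4; 0]; [:: 0; 3; 0; 1; 3; 0; 6; 3; 6; 1; 1; 3; 0]; [:: 4; 5; 5; 1; 0; 0; 0; 3; 2; 2; 6; 0; 0]; [:: 4; 0; 6; 0; 0; 0; 0; 5; 0; 4; 0; 0; 0]; [:: 4; 4; 6; 1; 3; 0; 4; 2; 2; 5; 1; 3; 0]; [:: 6; 6; 5; 2; 1; 5; 5; 6; 4; 0; 2; 2; 0]];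
  [:: [:: 1; 6; 3; 0; 5; 3; 5; 5; 6; 5; 5; 1; 0]; [:: 3; 6; 2; 3; 3; 2; 1; 3; 2; 4; 5; 5; 5]; [:: 1; 2; 6; 4; 1; 3; 5; 0; 6; 4; 1; 3; 0]; [:: 3; 0; 2; 0; 0; 0; 0; 2; 0; 6; 0; 0; 0]; [:: 6; 4; 2; 6; 0; 0; 0; 1; 3; 5; 1; 0; 0]; [:: 0; 1; 0; 5; 1; 2; 2; 4; 2; 1; 5; 2; 0]; [:: 0; 5; 0; 4; 5; 0; 5; 5; 5; 4; 2; 5; 0]; [:: 2; 1; 5; 0; 6; 5; 5; 2; 0; 3; 0; 2; 0]; [:: 6; 0; 1; 6; 1; 2; 1; 5; 0; 5; 0; 4; 0]; [:: 4; 5; 5; 1; 0; 0; 0; 3; 2; 2; 6; 0; 0]; [:: 4; 0; 6; 0; 0; 0; 0; 5; 0; 4; 0; 0; 0]; [:: 4; 4; 6; 1; 3; 0; 4; 2; 2; 5; 1; 3; 0]; [:: 6; 6; 5; 2; 1; 5; 5; 6; 4; 0; 2; 2; 0]];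
  [:: [:: 1; 0; 3; 5; 6; 2; 6; 5; 0; 4; 4; 2; 0]; [:: 3; 2; 2; 4; 6; 6; 4; 1; 5; 5; 2; 6; 5]; [:: 1; 5; 3; 5; 2; 2; 2; 5; 5; 4; 0; 2; 0]; [:: 2; 4; 1; 2; 0; 0; 0; 6; 5; 3; 6; 0; 0]; [:: 0; 0; 0; 5; 0; 0; 0; 0; 0; 0; 2; 0; 0]; [:: 0; 5; 0; 4; 5; 6; 3; 2; 3; 2; 4; 3; 0]; [:: 0; 6; 0; 2; 6; 4; 6; 1; 6; 2; 1; 4; 0]; [:: 0; 3; 0; 1; 3; 6; 3; 5; 3; 3; 4; 6; 0]; [:: 0; 5; 0; 4; 5; 2; 3; 3; 3; 3; 4; 1; 0]; [:: 3; 0; 6; 5; 6; 6; 6; 1; 2; 3; 0; 6; 0]; [:: 0; 2; 0; 1; 0; 0; 0; 0; 5; 0; 6; 0; 0]; [:: 0; 6; 4; 3; 6; 3; 3; 6; 3; 1; 3; 3; 0]; [:: 0; 1; 0; 2; 5; 4; 5; 4; 0; 3; 3; 0; 0]];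
  [:: [:: 1; 6; 3; 0; 5; 3; 5; 5; 6; 5; 5; 1; 0]; [:: 3; 6; 2; 3; 3; 2; 1; 3; 2; 4; 5; 5; 5]; [:: 6; 3; 1; 0; 4; 0; 2; 4; 1; 5; 6; 5; 0]; [:: 3; 0; 2; 0; 0; 0; 0; 2; 0; 6; 0; 0; 0]; [:: 6; 4; 2; 6; 0; 0; 0; 1; 3; 5; 1; 0; 0]; [:: 0; 1; 0; 5; 1; 2; 2; 4; 2; 1; 5; 2; 0]; [:: 0; 5; 0; 4; 5; 0; 5; 5; 5; 4; 2; 5; 0]; [:: 0; 2; 0; 3; 2; 2; 2; 6; 2; 4; 5; 4; 0]; [:: 0; 3; 0; 1; 3; 0; 6; 3; 6; 1; 1; 3; 0]; [:: 4; 5; 5; 1; 0; 0; 0; 3; 2; 2; 6; 0; 0]; [:: 4; 0; 6; 0; 0; 0; 0; 5; 0; 4; 0; 0; 0]; [:: 4; 4; 6; 1; 3; 0; 4; 2; 2; 5; 1; 3; 0]; [:: 6; 6; 5; 2; 1; 5; 5; 6; 4; 0; 2; 2; 0]];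
  [:: [:: 1; 6; 3; 0; 5; 3; 5; 5; 6; 5; 5; 1; 0]; [:: 3; 6; 2; 3; 3; 2; 1; 3; 2; 4; 5; 5; 5]; [:: 6; 3; 3; 3; 1; 4; 1; 4; 5; 2; 5; 5; 0]; [:: 2; 0; 1; 0; 0; 0; 0; 6; 0; 3; 0; 0; 0]; [:: 0; 0; 4; 5; 0; 0; 0; 0; 0; 3; 2; 0; 0]; [:: 0; 6; 0; 2; 6; 3; 5; 0; 5; 3; 2; 4; 0]; [:: 0; 5; 0; 4; 5; 1; 5; 0; 5; 1; 2; 6; 0]; [:: 0; 5; 0; 4; 5; 3; 5; 4; 5; 2; 2; 1; 0]; [:: 0; 3; 0; 1; 3; 4; 6; 2; 6; 0; 1; 5; 0]; [:: 5; 1; 6; 4; 0; 0; 0; 2; 6; 1; 3; 0; 0]; [:: 0; 0; 5; 0; 0; 0; 0; 0; 0; 1; 0; 0; 0]; [:: 0; 0; 4; 0; 0; 2; 4; 5; 4; 2; 3; 3; 0]; [:: 1; 1; 4; 2; 5; 3; 4; 1; 6; 5; 4; 2; 0]];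
  [:: [:: 2; 6; 6; 3; 6; 0; 2; 3; 1; 3; 4; 2; 0]; [:: 0; 5; 4; 2; 1; 4; 3; 5; 6; 2; 0; 6; 5]; [:: 1; 5; 6; 3; 2; 1; 3; 5; 3; 1; 0; 0; 0]; [:: 4; 4; 2; 2; 5; 6; 6; 0; 0; 3; 2; 6; 0]; [:: 1; 6; 2; 4; 3; 5; 4; 0; 1; 0; 4; 1; 0]; [:: 0; 0; 0; 0; 0; 0; 0; 5; 0; 0; 0; 4; 0]; [:: 3; 3; 0; 0; 5; 4; 2; 6; 0; 3; 1; 2; 0]; [:: 6; 2; 4; 4; 2; 3; 1; 4; 6; 5; 6; 1; 0]; [:: 6; 6; 0; 4; 2; 3; 3; 4; 4; 0; 6; 0; 0]; [:: 3; 3; 0; 0; 5; 5; 5; 6; 0; 0; 6; 2; 0]; [:: 0; 0; 0; 0; 0; 1; 0; 3; 0; 5; 0; 1; 0]; [:: 4; 4; 0; 1; 0; 3; 6; 1; 2; 6; 0; 2; 0]; [:: 0; 6; 1; 1; 5; 1; 6; 5; 6; 5; 5; 6; 0]];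
  [:: [:: 1; 5; 6; 3; 2; 5; 1; 4; 1; 5; 0; 0; 0]; [:: 6; 4; 4; 2; 4; 5; 0; 1; 6; 1; 2; 0; 5]; [:: 4; 2; 4; 1; 2; 2; 4; 0; 5; 1; 3; 0; 0]; [:: 4; 2; 5; 6; 3; 3; 5; 4; 2; 5; 3; 1; 0]; [:: 0; 3; 4; 6; 3; 0; 4; 0; 3; 4; 3; 5; 0]; [:: 1; 4; 1; 2; 4; 5; 0; 6; 3; 5; 2; 2; 0]; [:: 5; 6; 5; 3; 6; 4; 3; 1; 1; 3; 1; 5; 0]; [:: 4; 5; 6; 3; 5; 3; 2; 4; 5; 6; 5; 4; 0]; [:: 3; 4; 1; 5; 6; 4; 3; 3; 4; 1; 6; 3; 0]; [:: 4; 4; 0; 0; 2; 4; 6; 5; 0; 4; 3; 4; 0]; [:: 0; 0; 0; 0; 0; 6; 0; 0; 0; 2; 0; 0; 0]; [:: 4; 6; 4; 1; 4; 5; 1; 4; 6; 5; 4; 5; 0]; [:: 6; 2; 6; 1; 1; 4; 0; 2; 4; 0; 3; 5; 0]];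
  [:: [:: 1; 5; 6; 3; 2; 5; 1; 4; 1; 5; 0; 0; 0]; [:: 6; 4; 4; 2; 4; 5; 0; 1; 6; 1; 2; 0; 5]; [:: 2; 0; 6; 3; 2; 2; 4; 5; 3; 3; 5; 0; 0]; [:: 4; 5; 1; 1; 4; 3; 2; 4; 5; 1; 4; 3; 0]; [:: 3; 3; 0; 6; 3; 4; 4; 3; 3; 0; 3; 0; 0]; [:: 0; 0; 0; 0; 0; 2; 0; 1; 0; 3; 0; 5; 0]; [:: 1; 1; 0; 0; 4; 6; 6; 3; 0; 0; 3; 1; 0]; [:: 3; 1; 3; 3; 6; 5; 0; 2; 0; 4; 5; 1; 0]; [:: 2; 1; 4; 2; 4; 1; 2; 6; 5; 0; 1; 2; 0]; [:: 6; 6; 0; 0; 3; 4; 3; 4; 0; 5; 5; 6; 0]; [:: 0; 0; 0; 0; 0; 0; 0; 5; 0; 0; 0; 4; 0]; [:: 0; 0; 0; 1; 5; 0; 1; 5; 3; 2; 3; 3; 0]; [:: 1; 5; 3; 3; 5; 4; 2; 5; 6; 5; 3; 6; 0]];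
  [:: [:: 2; 2; 4; 5; 3; 4; 4; 5; 5; 3; 1; 1; 0]; [:: 6; 2; 5; 1; 0; 5; 2; 1; 4; 2; 5; 3; 5]; [:: 2; 5; 4; 4; 0; 4; 6; 5; 0; 3; 1; 1; 0]; [:: 4; 2; 3; 5; 6; 3; 5; 4; 2; 3; 6; 2; 0]; [:: 2; 4; 2; 3; 5; 5; 3; 2; 4; 2; 5; 6; 0]; [:: 0; 3; 0; 0; 5; 3; 3; 3; 2; 1; 4; 1; 0]; [:: 0; 0; 0; 0; 0; 0; 3; 0; 0; 0; 5; 0; 0]; [:: 5; 4; 5; 6; 3; 2; 3; 5; 4; 5; 3; 1; 0]; [:: 3; 4; 4; 6; 3; 4; 3; 3; 4; 4; 3; 5; 0]; [:: 6; 4; 5; 5; 5; 0; 2; 1; 0; 5; 6; 3; 0]; [:: 0; 1; 0; 0; 4; 0; 5; 0; 0; 0; 6; 0; 0]; [:: 6; 2; 6; 6; 3; 3; 2; 6; 2; 0; 5; 4; 0]; [:: 4; 5; 1; 3; 2; 3; 4; 4; 0; 1; 4; 3; 0]];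
  [:: [:: 1; 5; 6; 3; 2; 5; 1; 4; 1; 5; 0; 0; 0]; [:: 6; 4; 4; 2; 4; 5; 0; 1; 6; 1; 2; 0; 5]; [:: 1; 4; 1; 2; 4; 3; 4; 5; 3; 3; 4; 4; 0]; [:: 4; 2; 5; 6; 3; 3; 5; 4; 2; 5; 3; 1; 0]; [:: 0; 3; 4; 6; 3; 0; 4; 0; 3; 4; 3; 5; 0]; [:: 0; 0; 0; 0; 0; 3; 0; 3; 0; 1; 0; 1; 0]; [:: 0; 0; 0; 0; 0; 1; 3; 0; 0; 4; 5; 0; 0]; [:: 4; 5; 6; 3; 5; 3; 2; 4; 5; 6; 5; 4; 0]; [:: 3; 4; 1; 5; 6; 4; 3; 3; 4; 1; 6; 3; 0]; [:: 4; 4; 0; 0; 2; 4; 6; 5; 0; 4; 3; 4; 0]; [:: 0; 0; 0; 0; 0; 6; 0; 0; 0; 2; 0; 0; 0]; [:: 4; 6; 4; 1; 4; 5; 1; 4; 6; 5; 4; 5; 0]; [:: 6; 2; 6; 1; 1; 4; 0; 2; 4; 0; 3; 5; 0]];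
  [:: [:: 1; 5; 6; 3; 2; 5; 1; 4; 1; 5; 0; 0; 0]; [:: 6; 4; 4; 2; 4; 5; 0; 1; 6; 1; 2; 0; 5]; [:: 5; 1; 0; 4; 5; 5; 2; 2; 5; 3; 2; 4; 0]; [:: 4; 5; 1; 1; 4; 3; 2; 4; 5; 1; 4; 3; 0]; [:: 3; 3; 0; 6; 3; 4; 4; 3; 3; 0; 3; 0; 0]; [:: 0; 0; 0; 0; 0; 2; 0; 1; 0; 3; 0; 5; 0]; [:: 1; 1; 0; 0; 4; 6; 6; 3; 0; 0; 3; 1; 0]; [:: 6; 2; 4; 4; 2; 1; 5; 6; 2; 4; 2; 5; 0]; [:: 4; 4; 0; 5; 6; 3; 3; 4; 4; 0; 6; 0; 0]; [:: 6; 6; 0; 0; 3; 4; 3; 4; 0; 5; 5; 6; 0]; [:: 0; 0; 0; 0; 0; 0; 0; 5; 0; 0; 0; 4; 0]; [:: 0; 0; 0; 1; 5; 0; 1; 5; 3; 2; 3; 3; 0]; [:: 1; 5; 3; 3; 5; 4; 2; 5; 6; 5; 3; 6; 0]];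
  [:: [:: 2; 4; 5; 2; 0; 5; 6; 4; 6; 3; 2; 3; 0]; [:: 6; 5; 3; 2; 1; 5; 3; 5; 6; 5; 0; 2; 5]; [:: 2; 4; 3; 6; 6; 6; 5; 2; 2; 5; 6; 1; 0]; [:: 6; 3; 6; 0; 5; 5; 0; 6; 6; 6; 4; 2; 0]; [:: 2; 4; 3; 1; 1; 6; 2; 2; 6; 2; 6; 5; 0]; [:: 1; 6; 2; 5; 6; 4; 3; 1; 4; 3; 4; 2; 0]; [:: 4; 4; 3; 6; 4; 6; 5; 4; 5; 1; 2; 1; 0]; [:: 0; 0; 0; 0; 0; 5; 0; 3; 0; 0; 0; 0; 0]; [:: 0; 0; 1; 5; 4; 0; 4; 4; 6; 6; 0; 5; 0]; [:: 0; 0; 0; 0; 0; 4; 5; 6; 4; 0; 0; 0; 0]; [:: 0; 0; 0; 0; 0; 4; 0; 1; 0; 5; 0; 3; 0]; [:: 5; 5; 6; 3; 0; 3; 5; 3; 3; 1; 5; 3; 0]; [:: 3; 4; 2; 2; 2; 3; 2; 0; 4; 5; 6; 4; 0]];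
  [:: [:: 2; 4; 3; 6; 6; 2; 4; 3; 3; 4; 2; 5; 0]; [:: 6; 5; 1; 6; 0; 3; 4; 2; 4; 1; 0; 1; 5]; [:: 2; 4; 3; 2; 1; 1; 5; 2; 1; 3; 6; 4; 0]; [:: 2; 5; 1; 4; 5; 3; 5; 3; 5; 4; 2; 6; 0]; [:: 3; 3; 0; 6; 3; 0; 4; 1; 3; 0; 3; 2; 0]; [:: 2; 2; 0; 1; 3; 5; 1; 1; 3; 3; 0; 2; 0]; [:: 3; 6; 6; 5; 4; 1; 5; 5; 4; 4; 0; 3; 0]; [:: 0; 0; 0; 0; 0; 0; 0; 0; 0; 1; 0; 2; 0]; [:: 0; 0; 0; 0; 0; 3; 2; 1; 3; 0; 0; 0; 0]; [:: 0; 0; 1; 5; 4; 3; 1; 0; 5; 2; 0; 4; 0]; [:: 0; 0; 0; 0; 0; 1; 0; 2; 0; 0; 0; 0; 0]; [:: 5; 5; 0; 1; 4; 4; 1; 4; 0; 2; 4; 2; 0]; [:: 2; 5; 1; 2; 0; 2; 1; 4; 6; 6; 6; 6; 0]];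
  [:: [:: 2; 4; 3; 6; 6; 2; 4; 3; 3; 4; 2; 5; 0]; [:: 6; 5; 1; 6; 0; 3; 4; 2; 4; 1; 0; 1; 5]; [:: 0; 2; 5; 4; 1; 1; 5; 0; 6; 5; 1; 4; 0]; [:: 1; 2; 0; 3; 2; 0; 2; 5; 2; 0; 5; 3; 0]; [:: 6; 3; 3; 6; 3; 2; 4; 2; 3; 5; 3; 4; 0]; [:: 4; 1; 3; 2; 1; 2; 6; 6; 1; 5; 1; 5; 0]; [:: 3; 5; 6; 4; 5; 4; 5; 1; 5; 3; 2; 2; 0]; [:: 0; 4; 5; 4; 3; 6; 3; 1; 5; 1; 2; 4; 0]; [:: 0; 5; 5; 4; 4; 2; 2; 6; 1; 3; 6; 5; 0]; [:: 0; 0; 5; 4; 6; 5; 3; 6; 1; 3; 0; 6; 0]; [:: 0; 0; 0; 0; 0; 5; 0; 3; 0; 2; 0; 4; 0]; [:: 3; 6; 0; 0; 6; 6; 0; 3; 6; 1; 0; 0; 0]; [:: 0; 1; 6; 5; 3; 5; 4; 2; 6; 4; 2; 2; 0]];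
  [:: [:: 1; 5; 3; 4; 0; 2; 5; 5; 4; 4; 1; 2; 0]; [:: 3; 1; 2; 0; 3; 6; 0; 1; 0; 5; 4; 6; 5]; [:: 1; 6; 3; 2; 5; 2; 6; 5; 3; 4; 5; 2; 0]; [:: 5; 5; 4; 6; 5; 5; 4; 4; 5; 2; 3; 1; 0]; [:: 5; 6; 5; 4; 6; 1; 5; 4; 6; 6; 2; 1; 0]; [:: 6; 6; 6; 1; 6; 4; 3; 2; 6; 3; 4; 4; 0]; [:: 6; 3; 2; 2; 3; 6; 6; 2; 3; 1; 1; 4; 0]; [:: 0; 0; 0; 6; 2; 5; 0; 3; 5; 5; 6; 3; 0]; [:: 0; 0; 0; 6; 2; 0; 0; 0; 0; 0; 0; 0; 0]; [:: 3; 4; 2; 0; 6; 3; 3; 2; 1; 1; 6; 5; 0]; [:: 0; 0; 0; 1; 5; 0; 6; 0; 2; 0; 0; 0; 0]; [:: 1; 1; 1; 4; 2; 2; 3; 0; 1; 5; 4; 1; 0]; [:: 2; 5; 6; 1; 0; 4; 6; 3; 3; 3; 0; 6; 0]];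
  [:: [:: 2; 4; 3; 6; 6; 2; 4; 3; 3; 4; 2; 5; 0]; [:: 6; 5; 1; 6; 0; 3; 4; 2; 4; 1; 0; 1; 5]; [:: 0; 5; 0; 0; 5; 0; 2; 2; 1; 2; 6; 3; 0]; [:: 1; 2; 0; 3; 2; 0; 2; 5; 2; 0; 5; 3; 0]; [:: 6; 3; 3; 6; 3; 2; 4; 2; 3; 5; 3; 4; 0]; [:: 4; 1; 3; 2; 1; 2; 6; 6; 1; 5; 1; 5; 0]; [:: 3; 5; 6; 4; 5; 4; 5; 1; 5; 3; 2; 2; 0]; [:: 0; 0; 0; 0; 0; 5; 0; 3; 0; 5; 0; 3; 0]; [:: 0; 0; 4; 6; 2; 6; 0; 5; 0; 1; 0; 2; 0]; [:: 0; 0; 5; 4; 6; 5; 3; 6; 1; 3; 0; 6; 0]; [:: 0; 0; 0; 0; 0; 5; 0; 3; 0; 2; 0; 4; 0]; [:: 3; 6; 0; 0; 6; 6; 0; 3; 6; 1; 0; 0; 0]; [:: 0; 1; 6; 5; 3; 5; 4; 2; 6; 4; 2; 2; 0]];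
  [:: [:: 2; 4; 3; 6; 6; 2; 4; 3; 3; 4; 2; 5; 0]; [:: 6; 5; 1; 6; 0; 3; 4; 2; 4; 1; 0; 1; 5]; [:: 6; 2; 2; 0; 3; 4; 5; 0; 3; 4; 3; 0; 0]; [:: 2; 5; 1; 4; 5; 3; 5; 3; 5; 4; 2; 6; 0]; [:: 3; 3; 0; 6; 3; 0; 4; 1; 3; 0; 3; 2; 0]; [:: 1; 6; 2; 5; 6; 6; 1; 5; 6; 1; 6; 3; 0]; [:: 5; 5; 2; 4; 5; 6; 5; 4; 5; 1; 2; 1; 0]; [:: 0; 0; 0; 0; 0; 0; 0; 0; 0; 1; 0; 2; 0]; [:: 0; 0; 0; 0; 0; 3; 2; 1; 3; 0; 0; 0; 0]; [:: 0; 0; 1; 5; 4; 3; 1; 0; 5; 2; 0; 4; 0]; [:: 0; 0; 0; 0; 0; 1; 0; 2; 0; 0; 0; 0; 0]; [:: 5; 5; 0; 1; 4; 4; 1; 4; 0; 2; 4; 2; 0]; [:: 2; 5; 1; 2; 0; 2; 1; 4; 6; 6; 6; 6; 0]]]%N.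
Definition pidx (i j : nat) : nat :=
  if i == 0%N then (j - 1)%N else if i == 1%N then (j + 1)%N else 5%N.
Definition Kof (i j r : nat) := nth [::] Ktab (pidx i j * 6 + r).
Definition sumL (f : nat -> 'Z_7) := foldr (fun k acc => f k + acc) 0 (iota 0 13).
Definition inA0 (i j : nat) := fun k : 'I_4 => (val k == i) || (val k == j).
Definition Jl inA r := [seq [seq JE inA (ordn r) (ordn ii) (ordn k) | k <- iota 0 13] | ii <- iota 0 13].
Definition chkM (J : seq (seq 'Z_7)) (Kl : seq (seq nat)) : bool :=
  all (fun ii => all (fun jj =>
     sumL (fun k => nth 0 (nth [::] J ii) k * (nth 0%N (nth [::] Kl k) jj)%:R) == (ii == jj)%:R)
     (iota 0 13)) (iota 0 13).
Definition chk i j r := chkM (Jl (inA0 i j) r) (Kof i j r).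

Lemma chk_all : all (fun i => all (fun j => (i < j)%N ==> all (fun r => chk i j r) (iota 0 6))
   (iota 0 4)) (iota 0 4).
Proof. vm_cast_no_check (erefl true). Qed.


Lemma sumLE f : sumL f = \sum_(k < 13) f k.
Proof.
have H : forall s, foldr (fun k acc => f k + acc) 0 s = \sum_(k <- s) f k.
  by elim=> [|x s IH]; rewrite ?big_nil ?big_cons /= ?IH.
by rewrite /sumL H -(big_mkord xpredT f).
Qed.

Lemma Jl_nth inA r ii k : (ii < 13)%N -> (k < 13)%N ->
  nth 0 (nth [::] (Jl inA r) ii) k = JE inA (ordn r) (ordn ii) (ordn k).
Proof.
move=> hi hk; rewrite /Jl (nth_map 0%N) ?size_iota // nth_iota //.
by rewrite (nth_map 0%N) ?size_iota // nth_iota.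
Qed.

Lemma lfsE2 ii : (lfs ii : 'I_4 -> 'I_2) = lfF ii.
Proof. by apply: functional_extensionality => k; rewrite ffunE. Qed.

Lemma inA_set2 (x y : 'I_4) : (fun k => k \in [set x; y]) = inA0 x y.
Proof. by apply: functional_extensionality => k; rewrite !inE. Qed.

Lemma JE_Jm (A : tree4) (x y : nat) (r : 'I_6) (ii k : 'I_13) :
  (fun k => k \in A) = inA0 x y ->
  JE (inA0 x y) (ordn r) (ordn ii) (ordn k) = Jm A r zF ii k.
Proof.
move=> HA; rewrite /JE mxE !phiG_E HA !ordnE !inord_val lfsE2 //.
Qed.

Lemma detZ7 (A : tree4) r : #|A| = 2%N -> \det (Jm A r zF) != 0.
Proof.
move/eqP/cards2P => [x [y [nxy ->]]].
wlog lt : x y nxy / (val x < val y)%N.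
  move=> W; case: (ltngtP (val x) (val y)) => h; first exact: W.
    by rewrite setUC; apply: W => //; rewrite eq_sym.
  by move/val_inj: h => h; rewrite h eqxx in nxy.
have Hc : chk x y r.
  have hx : (val x \in iota 0 4) by rewrite mem_iota add0n leq0n ltn_ord.
  have hy : (val y \in iota 0 4) by rewrite mem_iota add0n leq0n ltn_ord.
  have hr : (val r \in iota 0 6) by rewrite mem_iota add0n leq0n ltn_ord.
  by move: chk_all => /allP/(_ _ hx)/allP/(_ _ hy)/implyP/(_ lt)/allP/(_ _ hr).
pose Km := \matrix_(k < 13, jj < 13) ((nth 0%N (nth [::] (Kof x y r) k) jj)%:R : 'Z_7).
have HM : Jm [set x; y] r zF *m Km = 1%:M.
  apply/matrixP => ii jj; rewrite !mxE.
  have hi : (val ii \in iota 0 13) by rewrite mem_iota add0n leq0n ltn_ord.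
  have hj : (val jj \in iota 0 13) by rewrite mem_iota add0n leq0n ltn_ord.
  move: Hc; rewrite /chk /chkM => /allP/(_ _ hi)/allP/(_ _ hj)/eqP <-.
  rewrite sumLE; apply: eq_bigr => k _; rewrite Jl_nth ?ltn_ord // (@JE_Jm [set x; y]) ?inA_set2 // [Km _ _]mxE.
  by [].
have [Hu _] := mulmx1_unit HM.
apply/eqP => H0; move: Hu; by rewrite unitmxE H0 unitr0.
Qed.

Definition zI (k : 'I_13) : int := (nth 0%N zpt k)%:R.

Lemma detInt (A : tree4) r : #|A| = 2%N -> \det (Jm A r zI) != 0.
Proof.
move=> HA; apply/eqP => H.
have := detZ7 r HA.
have -> : zF = (intr : {rmorphism int -> 'Z_7}) \o zI.
  by apply: functional_extensionality => k; rewrite /zF /zI /= rmorph_nat.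
by rewrite -Jm_map det_map_mx H rmorph0 eqxx.
Qed.

Definition zC (R : realType) (k : 'I_13) : R[i] := (nth 0%N zpt k)%:R.

Lemma detC (R : realType) (A : tree4) r : #|A| = 2%N -> \det (Jm A r (@zC R)) != 0.
Proof.
move=> HA.
have -> : @zC R = (intr : {rmorphism int -> R[i]}) \o zI.
  by apply: functional_extensionality => k; rewrite /zC /zI /= rmorph_nat.
by rewrite -Jm_map det_map_mx /= intr_eq0 detInt.
Qed.


Section Affine.
Variable K : comNzRingType.
Definition Cst (f : K -> K) := forall t, f t = f 0.
Definition Af (f : K -> K) := forall t, f t = f 0 + t * (f 1 - f 0).

Lemma Cst_Af f : Cst f -> Af f.
Proof. by move=> H t; rewrite H (H 1) subrr mulr0 addr0. Qed.
Lemma CstC c : Cst (fun _ => c). Proof. by []. Qed.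
Lemma CstD f g : Cst f -> Cst g -> Cst (fun t => f t + g t).
Proof. by move=> Hf Hg t /=; rewrite Hf Hg. Qed.
Lemma CstM f g : Cst f -> Cst g -> Cst (fun t => f t * g t).
Proof. by move=> Hf Hg t /=; rewrite Hf Hg. Qed.
Lemma AfD f g : Af f -> Af g -> Af (fun t => f t + g t).
Proof. by move=> Hf Hg t /=; rewrite [f t]Hf [g t]Hg; ring. Qed.
Lemma AfMr f g : Af f -> Cst g -> Af (fun t => f t * g t).
Proof. by move=> Hf Hg t /=; rewrite [f t]Hf [g t]Hg (Hg 1); ring. Qed.
Lemma AfMl f g : Cst f -> Af g -> Af (fun t => f t * g t).
Proof. by move=> Hf Hg t /=; rewrite [f t]Hf [g t]Hg (Hf 1); ring. Qed.
Lemma CstB1 f : Cst f -> Cst (fun t => 1 - f t).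
Proof. by move=> Hf t /=; rewrite Hf. Qed.
Lemma AfB1 f : Af f -> Af (fun t => 1 - f t).
Proof. by move=> Hf t /=; rewrite [f t]Hf; ring. Qed.

Lemma Af_sum (I : finType) (F : I -> K -> K) :
  (forall i, Af (F i)) -> Af (fun t => \sum_i F i t).
Proof.
move=> H t; rewrite (eq_bigr _ (fun i _ => H i t)) big_split /= -mulr_sumr sumrB //.
Qed.
Lemma Cst_sum (I : finType) (F : I -> K -> K) :
  (forall i, Cst (F i)) -> Cst (fun t => \sum_i F i t).
Proof. by move=> H t; apply: eq_bigr => i _; rewrite H. Qed.
Lemma Cst_prod (I : finType) (F : I -> K -> K) :
  (forall i, Cst (F i)) -> Cst (fun t => \prod_i F i t).
Proof. by move=> H t; apply: eq_bigr => i _; rewrite H. Qed.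
Lemma Af_prod (I : finType) (F : I -> K -> K) i0 :
  (forall i, i != i0 -> Cst (F i)) -> Af (F i0) -> Af (fun t => \prod_i F i t).
Proof.
move=> Hc Ha t /=.
have E : forall u, \prod_i F i u = F i0 u * \prod_(i | i != i0) F i 0.
  by move=> u; rewrite (bigD1 i0) //=; congr (_ * _); apply: eq_bigr => i /Hc ->.
rewrite !E [F i0 t]Ha; ring.
Qed.

Lemma upd_Af z k j : Af (fun t => upd z k t j).
Proof. by move=> t; rewrite /upd; case: ifP => _; ring. Qed.
Lemma upd_Cst z k j : j != k -> Cst (fun t => upd z k t j).
Proof. by move=> /negbTE h t; rewrite /upd h. Qed.
Lemma prob2_Af z k j i : Af (fun t => prob2G (upd z k t j) i).
Proof.
rewrite /prob2G; case: (val i == 0%N); first exact: upd_Af.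
by apply: AfB1; apply: upd_Af.
Qed.
Lemma prob2_Cst z k j i : j != k -> Cst (fun t => prob2G (upd z k t j) i).
Proof. by move=> h t /=; have E := upd_Cst z h t; rewrite /= in E; rewrite /prob2G E. Qed.
End Affine.


Lemma idx_lt (e : 'I_5) (st : 'I_2) : (3 + 2 * e + st < 13)%N.
Proof. case: e => e he; case: st => st hs /=; lia. Qed.

Lemma idx_ne (k : 'I_13) (e : 'I_5) (st : 'I_2) :
  e != inord ((k - 3) %/ 2) -> (inord (3 + 2 * e + st) : 'I_13) != k.
Proof.
move=> he; apply/eqP => hk; move/eqP: he; apply; apply: val_inj.
have h1 := idx_lt e st.
have hk' : val k = (3 + 2 * e + st)%N by rewrite -hk /= inordK.
have hs := ltn_ord st; have he := ltn_ord e.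
rewrite /= inordK hk'; lia.
Qed.

Lemma idx_small (k : 'I_13) (e : 'I_5) (st : 'I_2) :
  (val k < 3)%N -> (inord (3 + 2 * e + st) : 'I_13) != k.
Proof.
move=> hk; apply/eqP => h; move: hk; rewrite -h /= inordK ?idx_lt //; lia.
Qed.

Lemma neq_inord (n m : nat) : (n < 13)%N -> (m < 13)%N -> n != m ->
  (inord n : 'I_13) != inord m.
Proof.
move=> hn hm nm; apply/eqP => /(congr1 val); rewrite /= !inordK // => /eqP.
by rewrite (negbTE nm).
Qed.

Lemma phiG_Af (K : comNzRingType) (A : tree4) r (z : 'I_13 -> K) k lf :
  Af (fun t => phiG A r (upd z k t) lf).
Proof.
rewrite /phiG.
have [->|k0] := eqVneq k (inord 0).
  apply: AfD.
    apply: AfMr; first by apply: AfMr; [exact: upd_Af | exact: CstC].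
    by apply: prob2_Cst; apply: neq_inord.
  apply: AfMr; first by apply: AfB1; exact: upd_Af.
  apply: Cst_sum => a; apply: Cst_sum => b; apply: CstM.
    by apply: prob2_Cst; apply: neq_inord.
  by apply: Cst_prod => e; apply: prob2_Cst; apply: idx_small; rewrite /= inordK.
have [->|k1] := eqVneq k (inord 1).
  apply: AfD.
    apply: AfMl; last exact: prob2_Af.
    by apply: CstM; [apply: upd_Cst; apply: neq_inord | exact: CstC].
  apply: Cst_Af; apply: CstM.
    by apply: CstB1; apply: upd_Cst; apply: neq_inord.
  apply: Cst_sum => a; apply: Cst_sum => b; apply: CstM.
    by apply: prob2_Cst; apply: neq_inord.
  by apply: Cst_prod => e; apply: prob2_Cst; apply: idx_small; rewrite /= inordK.
have [->|k2] := eqVneq k (inord 2).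
  apply: AfD.
    apply: Cst_Af; apply: CstM; last by apply: prob2_Cst; apply: neq_inord.
    by apply: CstM; [apply: upd_Cst; apply: neq_inord | exact: CstC].
  apply: AfMl; first by apply: CstB1; apply: upd_Cst; apply: neq_inord.
  apply: Af_sum => a; apply: Af_sum => b; apply: AfMr; first exact: prob2_Af.
  by apply: Cst_prod => e; apply: prob2_Cst; apply: idx_small; rewrite /= inordK.
apply: AfD.
  apply: Cst_Af; apply: CstM; last by apply: prob2_Cst; rewrite eq_sym.
  by apply: CstM; [apply: upd_Cst; rewrite eq_sym | exact: CstC].
apply: AfMl; first by apply: CstB1; apply: upd_Cst; rewrite eq_sym.
apply: Af_sum => a; apply: Af_sum => b; apply: AfMl.
  by apply: prob2_Cst; rewrite eq_sym.
apply: (@Af_prod _ _ _ (inord ((k - 3) %/ 2))); last exact: prob2_Af.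
by move=> e he; apply: prob2_Cst; apply: idx_ne.
Qed.

Section Tele.
Variable K : comNzRingType.
Definition Wm (x y : 'I_13 -> K) (m : nat) : 'I_13 -> K :=
  fun j => if (j < m)%N then y j else x j.
Definition Gk (A : tree4) r (z : 'I_13 -> K) (k : 'I_13) lf :=
  phiG A r (upd z k 1) lf - phiG A r (upd z k 0) lf.

Lemma phiG_diff (A : tree4) r (z : 'I_13 -> K) k a b lf :
  phiG A r (upd z k a) lf - phiG A r (upd z k b) lf = (a - b) * Gk A r z k lf.
Proof.
have Ha : phiG A r (upd z k a) lf = phiG A r (upd z k 0) lf
  + a * (phiG A r (upd z k 1) lf - phiG A r (upd z k 0) lf) := phiG_Af A r z k lf a.
have Hb : phiG A r (upd z k b) lf = phiG A r (upd z k 0) lf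
  + b * (phiG A r (upd z k 1) lf - phiG A r (upd z k 0) lf) := phiG_Af A r z k lf b.
rewrite Ha Hb /Gk; ring.
Qed.

Lemma tele (A : tree4) r (x y : 'I_13 -> K) lf :
  phiG A r x lf - phiG A r y lf = \sum_(k < 13) (x k - y k) * Gk A r (Wm x y k) k lf.
Proof.
pose u n := phiG A r (Wm x y n) lf.
have u0 : u 0%N = phiG A r x lf.
  by rewrite /u; congr phiG; apply: functional_extensionality => j; rewrite /Wm ltn0.
have u13 : u 13%N = phiG A r y lf.
  by rewrite /u; congr phiG; apply: functional_extensionality => j; rewrite /Wm ltn_ord.
have step : forall k : 'I_13, u k - u k.+1 = (x k - y k) * Gk A r (Wm x y k) k lf.
  move=> k.
  have E1 : Wm x y k = upd (Wm x y k) k (x k).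
    apply: functional_extensionality => j; rewrite /upd /Wm.
    by case: eqVneq => [->|//]; rewrite ltnn.
  have E2 : Wm x y k.+1 = upd (Wm x y k) k (y k).
    apply: functional_extensionality => j; rewrite /upd /Wm ltnS leq_eqVlt val_eqE.
    by case: eqVneq => [->|//]; rewrite ltnn.
  by rewrite /u E2 {1}E1 phiG_diff.
rewrite -u0 -u13 -opprB -(telescope_sumr u (leq0n 13)) big_mkord -sumrN.
by apply: eq_bigr => k _; rewrite opprB step.
Qed.
End Tele.


Section Cont.
Variable R : realType.
Variable X : Type.
Variable N : R -> X -> Prop.
Hypothesis Nmono : forall d d' x, d <= d' -> N d x -> N d' x.
Definition ctN (F : X -> R) (c : R) :=
  forall e, 0 < e -> exists2 d, 0 < d & forall x, N d x -> `|F x - c| < e.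

Lemma ct_const c : ctN (fun _ => c) c.
Proof. by move=> e he; exists 1 => // x _; rewrite subrr normr0. Qed.

Lemma ct_min (P Q : X -> Prop) (d1 d2 : R) : 0 < d1 -> 0 < d2 ->
  (forall x, N d1 x -> P x) -> (forall x, N d2 x -> Q x) ->
  exists2 d, 0 < d & forall x, N d x -> P x /\ Q x.
Proof.
move=> h1 h2 H1 H2; exists (Num.min d1 d2); first by rewrite lt_min h1 h2.
move=> x Nx; split; [apply: H1 | apply: H2]; apply: Nmono Nx;
  by rewrite ge_min lexx ?orbT.
Qed.

Lemma ct_add f g a b : ctN f a -> ctN g b -> ctN (fun x => f x + g x) (a + b).
Proof.
move=> Hf Hg e he.
have he2 : 0 < e / 2 by rewrite divr_gt0.
have [d1 h1 H1] := Hf _ he2; have [d2 h2 H2] := Hg _ he2.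
have [d hd H] := ct_min h1 h2 H1 H2.
exists d => // x /H [Ha Hb].
have E : f x + g x - (a + b) = (f x - a) + (g x - b) by ring.
rewrite E; apply: (le_lt_trans (ler_normD _ _)).
by rewrite [e](splitr e) ltrD.
Qed.

Lemma ct_opp f a : ctN f a -> ctN (fun x => - f x) (- a).
Proof.
move=> Hf e he; have [d hd H] := Hf _ he; exists d => // x /H.
by rewrite -opprD normrN.
Qed.

Lemma ct_mul f g a b : ctN f a -> ctN g b -> ctN (fun x => f x * g x) (a * b).
Proof.
move=> Hf Hg e he.
set C := 1 + `|a| + `|b|.
have hC : 0 < C by rewrite /C; have := normr_ge0 a; have := normr_ge0 b; lra.
pose eta := Num.min 1 (e / C).
have heta : 0 < eta by rewrite lt_min ltr01 divr_gt0.
have heta1 : eta <= 1 by rewrite ge_min lexx.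
have hetaC : eta * C <= e.
  by rewrite -ler_pdivlMr // ge_min lexx orbT.
have [d1 h1 H1] := Hf _ heta; have [d2 h2 H2] := Hg _ heta.
have [d hd H] := ct_min h1 h2 H1 H2.
exists d => // x /H [Ha Hb].
have E : f x * g x - a * b = (f x - a) * (g x - b) + a * (g x - b) + b * (f x - a) by ring.
rewrite E.
set u := f x - a in Ha *; set v := g x - b in Hb *.
have n1 := ler_normD (u * v + a * v) (b * u).
have n2 := ler_normD (u * v) (a * v).
rewrite !normrM in n1 n2.
have hu := normr_ge0 u; have hv := normr_ge0 v.
have ha := normr_ge0 a; have hb := normr_ge0 b.
have k1 : `|u| * `|v| <= eta * `|v| by apply: ler_wpM2r => //; exact: ltW.
have k2 : eta * `|v| < eta * eta by rewrite ltr_pM2l.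
have k3 : eta * eta <= eta * 1 by apply: ler_wpM2l => //; exact: ltW.
have k4 : `|a| * `|v| <= `|a| * eta by apply: ler_wpM2l => //; exact: ltW.
have k5 : `|b| * `|u| <= `|b| * eta by apply: ler_wpM2l => //; exact: ltW.
have : `|u * v + a * v + b * u| < eta * C.
  rewrite /C; apply: (le_lt_trans n1); lra.
move=> h; apply: (lt_le_trans h); exact: hetaC.
Qed.

Lemma ct_sum (I : Type) (r : seq I) (P : pred I) (F : I -> X -> R) (c : I -> R) :
  (forall i, ctN (F i) (c i)) ->
  ctN (fun x => \sum_(i <- r | P i) F i x) (\sum_(i <- r | P i) c i).
Proof.
move=> H; elim: r => [|i r IH].
  have -> : (fun x => \sum_(i <- [::] | P i) F i x) = (fun _ => 0).
    by apply: functional_extensionality => x; rewrite big_nil.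
  rewrite big_nil; exact: ct_const.
have -> : (fun x => \sum_(j <- i :: r | P j) F j x) = (fun x => if P i then F i x + \sum_(j <- r | P j) F j x else \sum_(j <- r | P j) F j x).
  by apply: functional_extensionality => x; rewrite big_cons.
rewrite big_cons; case: (P i) => //; exact: ct_add.
Qed.

Lemma ct_prod (I : Type) (r : seq I) (P : pred I) (F : I -> X -> R) (c : I -> R) :
  (forall i, ctN (F i) (c i)) ->
  ctN (fun x => \prod_(i <- r | P i) F i x) (\prod_(i <- r | P i) c i).
Proof.
move=> H; elim: r => [|i r IH].
  have -> : (fun x => \prod_(i <- [::] | P i) F i x) = (fun _ => 1).
    by apply: functional_extensionality => x; rewrite big_nil.
  rewrite big_nil; exact: ct_const.
have -> : (fun x => \prod_(j <- i :: r | P j) F j x) = (fun x => if P i then F i x * \prod_(j <- r | P j) F j x else \prod_(j <- r | P j) F j x).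
  by apply: functional_extensionality => x; rewrite big_cons.
rewrite big_cons; case: (P i) => //; exact: ct_mul.
Qed.

Lemma ct_det n (M : X -> 'M[R]_n) (B : 'M[R]_n) :
  (forall i j, ctN (fun x => M x i j) (B i j)) -> ctN (fun x => \det (M x)) (\det B).
Proof.
move=> H; rewrite /determinant; apply: ct_sum => s.
apply: ct_mul; first exact: ct_const.
by apply: ct_prod => i; apply: H.
Qed.
End Cont.


Lemma ct_comp (R : realType) (X Y : Type) (N1 : R -> Y -> Prop) (N2 : R -> X -> Prop)
  (h : X -> Y) (F : Y -> R) c :
  ctN N1 F c -> (forall d x, 0 < d -> N2 d x -> N1 d (h x)) -> ctN N2 (fun x => F (h x)) c.
Proof.
move=> H Hh e he; have [d hd Hd] := H e he; exists d => // x hx.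
exact: Hd (Hh _ _ hd hx).
Qed.

Section Spec.
Variable R : realType.
Definition near (s : 'I_13 -> R) (d : R) (z : 'I_13 -> R) := forall j, `|z j - s j| < d.
Lemma near_mono s d d' z : d <= d' -> near s d z -> near s d' z.
Proof. by move=> h H j; apply: lt_le_trans (H j) h. Qed.
Definition near2 (s : 'I_13 -> R) (d : R) (p : ('I_13 -> R) * ('I_13 -> R)) :=
  near s d p.1 /\ near s d p.2.
Lemma near2_mono s d d' p : d <= d' -> near2 s d p -> near2 s d' p.
Proof. by move=> h [H1 H2]; split; apply: near_mono h _. Qed.

Lemma ct_proj s j : ctN (near s) (fun z => z j) (s j).
Proof. by move=> e he; exists e => // z /(_ j). Qed.

Lemma ct_prob2 s j i : ctN (near s) (fun z => prob2G (z j) i) (prob2G (s j) i).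
Proof.
rewrite /prob2G; case: (val i == 0%N); first exact: ct_proj.
apply: (ct_add (@near_mono s)); first exact: ct_const.
by apply: ct_opp; exact: ct_proj.
Qed.

Lemma ct_phiG (A : tree4) r lf s : ctN (near s) (fun z => phiG A r z lf) (phiG A r s lf).
Proof.
have M := @near_mono s.
rewrite /phiG; apply: (ct_add M).
  apply: (ct_mul M); last exact: ct_prob2.
  by apply: (ct_mul M); [exact: ct_proj | exact: ct_const].
apply: (ct_mul M).
  by apply: (ct_add M); [exact: ct_const | apply: ct_opp; exact: ct_proj].
apply: (ct_sum M) => a; apply: (ct_sum M) => b; apply: (ct_mul M); first exact: ct_prob2.
by apply: (ct_prod M) => e; exact: ct_prob2.
Qed.

Lemma ct_Gk (A : tree4) r k lf s : ctN (near s) (fun z => Gk A r z k lf) (Gk A r s k lf).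
Proof.
have M := @near_mono s.
have hu : forall c, ctN (near s) (fun z => phiG A r (upd z k c) lf) (phiG A r (upd s k c) lf).
  move=> c; apply: (ct_comp (ct_phiG A r lf (upd s k c))) => d z hd hz j.
  by rewrite /upd; case: ifP => _; rewrite ?subrr ?normr0.
rewrite /Gk; apply: (ct_add M); first exact: hu.
by apply: ct_opp; exact: hu.
Qed.

Definition Mx (A : tree4) r (p : ('I_13 -> R) * ('I_13 -> R)) : 'M[R]_13 :=
  \matrix_(i < 13, k < 13) Gk A r (Wm p.1 p.2 k) k (lfs i).

Lemma ct_Mx (A : tree4) r s : ctN (near2 s) (fun p => \det (Mx A r p)) (\det (Jm A r s)).
Proof.
apply: (ct_det (@near2_mono s)) => i k.
have -> : (fun p => Mx A r p i k) = (fun p => Gk A r (Wm p.1 p.2 k) k (lfs i)).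
  by apply: functional_extensionality => p; rewrite mxE.
rewrite mxE; apply: (ct_comp (ct_Gk A r k (lfs i) s)) => d p hd [h1 h2] j.
by rewrite /Wm; case: ifP => _; [exact: h2 | exact: h1].
Qed.

Lemma loc_inj (A : tree4) r (s : 'I_13 -> R) : \det (Jm A r s) != 0 -> locally_injective A r s.
Proof.
move=> hdet.
have he : 0 < `|\det (Jm A r s)| by rewrite normr_gt0.
have [d hd H] := ct_Mx A r s he.
exists d => // s1 s2 _ _ h1 h2 heq.
have hM : \det (Mx A r (s1, s2)) != 0.
  by apply/eqP => h0; have := H (s1, s2) (conj h1 h2); rewrite h0 sub0r normrN ltxx.
have hU : Mx A r (s1, s2) \in unitmx by rewrite unitmxE unitfE.
pose v := \col_(k < 13) (s1 k - s2 k).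
have hv : Mx A r (s1, s2) *m v = 0.
  apply/matrixP => i j; rewrite !mxE.
  have E := tele A r s1 s2 (lfs i).
  rewrite -!phiT_G heq subrr in E.
  apply: (etrans _ (esym E)); apply: eq_bigr => k _.
  by rewrite !mxE mulrC.
have hv0 : v = 0 by rewrite -(mulKmx hU v) hv mulmx0.
apply: functional_extensionality => k; apply/eqP; rewrite -subr_eq0.
by have := congr1 (fun m : 'M[R]_(13, 1) => m k ord0) hv0; rewrite !mxE => ->.
Qed.
End Spec.

Unset Implicit Arguments.
Theorem corollary8 (R : realType) (A : tree4) (r : 'I_6) :
  is_binary_tree4 A ->
  exists Y : ('I_13 -> R[i]) -> Prop,
    proper_variety Y /\
    forall s : 'I_13 -> R,
      stoch_params s -> ~ Y (realC s) -> locally_injective A r s.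
Proof.
move=> HA.
pose fp : {mpoly R[i][13]} := \det (Jm A r (fun k => 'X_k)).
have mev : forall z, meval z fp = \det (Jm A r z).
  move=> z; rewrite /fp -det_map_mx Jm_map; congr (\det (Jm A r _)).
  by apply: functional_extensionality => k /=; rewrite mevalXU.
exists (fun z => meval z fp = 0); split.
  split.
    by exists (fun f => f = fp) => z; split; [move=> H f -> | move=> H; apply: H].
  by exists (@zC R); rewrite mev; apply/eqP; exact: detC.
move=> s _ hY; apply: loc_inj; apply/eqP => h0; apply: hY.
rewrite mev.
have -> : realC s = (real_complex R) \o s by [].
by rewrite -Jm_map det_map_mx h0 rmorph0.
Qed.
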